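(* Let $(X,\rho,\mu)$ be a $K$-doubling metric measure space, let $x\in X$ with $\mu(\{x\})=0$, let $B$ be a $\mu$-neighborhood of $x$ and let $f\colon B\to[0,+\infty)$ be a Lipschitz function with $f(x)=0$. Then $$\limsup_{y\in B,\ y\to x}\frac{f(y)}{\rho(y,x)}=\mu\text{-}\limsup_{y\in B,\ y\to x}\frac{f(y)}{\rho(y,x)}.$$
   Context: A $K$-doubling metric measure space ($K>0$) is a triple $(X,\rho,\mu)$ where $(X,\rho)$ is a complete separable metric space and $\mu$ is a Borel-regular outer measure on $X$ with $0<\mu(B_{2r}(x))\le K\mu(B_r(x))<+\infty$ for all $x\in X$, $r>0$. A set $E\ni x$ is a $\mu$-neighborhood of $x$ if there is a Borel set $B\subseteq E$ with $\lim_{r\to0^+}\mu(B_r(x)\setminus B)/\mu(B_r(x))=0$. For a real function $g$ on $A\subseteq X$ and a point $x$ such that $A\cap U\setminus\{x\}\neq\emptyset$ for every $\mu$-neighborhood $U$ of $x$, one sets $\mu\text{-}\limsup_{y\in A,\,y\to x}g(y)=\inf_U\sup_{y\in U\cap A\setminus\{x\}}g(y)$, the infimum over all $\mu$-neighborhoods $U$ of $x$. *)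

(* Defs.v *)
From HB Require Import structures.
From mathcomp Require Import all_boot all_order all_algebra.
From mathcomp Require Import all_classical all_reals all_analysis.
Set Implicit Arguments. Unset Strict Implicit. Unset Printing Implicit Defensive.
Import Order.TTheory GRing.Theory Num.Theory.
Import numFieldNormedType.Exports.
Local Open Scope classical_set_scope.
Local Open Scope ring_scope.

Section MMS.
Context {R : realType} {X : Type}.

Definition is_metric (rho : X -> X -> R) : Prop :=
  [/\ forall x y, 0 <= rho x y,
      forall x y, rho x y = 0 <-> x = y,
      forall x y, rho x y = rho y x &
      forall x y z, rho x z <= rho x y + rho y z].

Definition mball (rho : X -> X -> R) (x : X) (r : R) : set X :=
  [set y | rho x y < r].

Definition metric_complete (rho : X -> X -> R) : Prop :=
  forall u : nat -> X,
    (forall e : R, 0 < e -> exists N, forall m n, (N <= m)%N -> (N <= n)%N ->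
        rho (u m) (u n) < e) ->
    exists l, forall e : R, 0 < e -> exists N, forall n, (N <= n)%N -> rho (u n) l < e.

Definition metric_separable (rho : X -> X -> R) : Prop :=
  exists D : nat -> X, forall x (e : R), 0 < e -> exists n, rho x (D n) < e.

Definition metric_open (rho : X -> X -> R) (A : set X) : Prop :=
  forall x, A x -> exists r : R, 0 < r /\ mball rho x r `<=` A.

Definition borel_set (rho : X -> X -> R) : set (set X) :=
  smallest (sigma_algebra setT) (metric_open rho).

Definition borel_regular (rho : X -> X -> R) (mu : set X -> \bar R) : Prop :=
  (forall A, borel_set rho A -> caratheodory_measurable mu A) /\
  (forall A, exists B, [/\ borel_set rho B, A `<=` B & mu B = mu A]).

Definition doubling_mms (K : R) (rho : X -> X -> R)
    (mu : {outer_measure set X -> \bar R}) : Prop :=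
  [/\ 0 < K, is_metric rho, metric_complete rho /\ metric_separable rho,
      borel_regular rho mu &
      forall x (r : R), 0 < r ->
        [/\ (0 < mu (mball rho x (2 * r)))%E,
            (mu (mball rho x (2 * r)) <= K%:E * mu (mball rho x r))%E &
            (K%:E * mu (mball rho x r) < +oo)%E]].

Definition mu_nbhd (rho : X -> X -> R) (mu : set X -> \bar R) (x : X) (E : set X)
  : Prop :=
  E x /\ exists B, [/\ borel_set rho B, B `<=` E &
    (fun r : R => fine (mu (mball rho x r `\` B)) / fine (mu (mball rho x r)))
      @ 0^'+ --> 0].

Definition metric_limsup (rho : X -> X -> R) (A : set X) (g : X -> R) (x : X)
  : \bar R :=
  ereal_inf [set ereal_sup [set (g y)%:E | y in (A `&` mball rho x r) `\ x]
            | r in [set r : R | 0 < r]].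

Definition mu_limsup (rho : X -> X -> R) (mu : set X -> \bar R) (A : set X)
    (g : X -> R) (x : X) : \bar R :=
  ereal_inf [set ereal_sup [set (g y)%:E | y in (U `&` A) `\ x]
            | U in mu_nbhd rho mu x].

Definition mms_lipschitz_on (rho : X -> X -> R) (B : set X) (f : X -> R) : Prop :=
  exists L : R, forall y z, B y -> B z -> `|f y - f z| <= L * rho y z.

End MMS.

(* Main.v *)
Require Import Defs.
From HB Require Import structures.
From mathcomp Require Import all_boot all_order all_algebra.
From mathcomp Require Import all_classical all_reals all_analysis.
From mathcomp Require Import lra ring.
Import Order.TTheory GRing.Theory Num.Theory.
Import numFieldNormedType.Exports.
Local Open Scope classical_set_scope.
Local Open Scope ring_scope.
Section H.
Variables (R : realType) (X : Type) (K : R) (rho : X -> X -> R)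
    (mu : {outer_measure set X -> \bar R}).
Hypothesis dm : doubling_mms K rho mu.

Lemma met0 : forall y z, 0 <= rho y z. Proof. by case: dm => _ [] . Qed.
Lemma metE : forall y z, rho y z = 0 <-> y = z. Proof. by case: dm => _ []. Qed.
Lemma metC : forall y z, rho y z = rho z y. Proof. by case: dm => _ []. Qed.
Lemma metT : forall y w z, rho y z <= rho y w + rho w z. Proof. by case: dm => _ []. Qed.
Lemma K0 : 0 < K. Proof. by case: dm. Qed.

Lemma mball_open z r : metric_open rho (mball rho z r).
Proof.
move=> w /= hw; exists (r - rho z w); split; first by rewrite subr_gt0.
move=> v; rewrite /mball /= => hv; have := metT z w v; lra.
Qed.

Lemma mball_borel z r : borel_set rho (mball rho z r).
Proof. exact: (@sub_smallest _ _ _ _ (@subset_refl _ _) _ (mball_open z r)). Qed.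

Lemma mball_fin z r : 0 < r -> mu (mball rho z r) \is a fin_num.
Proof.
move=> r0; case: dm => _ _ _ _ /(_ z r r0) [_ _].
rewrite ge0_fin_numE ?outer_measure_ge0 // => h; rewrite ltey; apply/negP => /eqP E.
by move: h; rewrite E gt0_muley ?lte_fin ?K0.
Qed.

Lemma sub_fin z r V : 0 < r -> V `<=` mball rho z r -> mu V \is a fin_num.
Proof.
move=> r0 Vs; rewrite ge0_fin_numE ?outer_measure_ge0 //.
apply: (le_lt_trans (le_outer_measure mu _ _ Vs)).
by rewrite -ge0_fin_numE ?outer_measure_ge0 // ?mball_fin.
Qed.

Lemma mball_pos z r : 0 < r -> 0 < fine (mu (mball rho z r)).
Proof.
move=> r0; have r20 : 0 < r / 2 by rewrite divr_gt0.
case: dm => _ _ _ _ /(_ z (r / 2) r20) [+ _ _].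
have -> : 2 * (r / 2) = r by field.
move=> h; rewrite fine_gt0 //; apply/andP; split => //.
by rewrite -ge0_fin_numE ?outer_measure_ge0 ?mball_fin.
Qed.

Lemma doubling_iter n z r : 0 < r ->
  fine (mu (mball rho z (2 ^+ n * r))) <= K ^+ n * fine (mu (mball rho z r)).
Proof.
move=> r0; elim: n => [|n IH]; first by rewrite !expr0 !mul1r.
have rn : 0 < 2 ^+ n * r by rewrite mulr_gt0 // exprn_gt0.
case: dm => _ _ _ _ /(_ z _ rn) [_ h _].
rewrite exprS -mulrA.
have F1 : mu (mball rho z (2 * (2 ^+ n * r))) \is a fin_num by apply: mball_fin; rewrite mulr_gt0.
have F2 : (K%:E * mu (mball rho z (2 ^+ n * r)))%E \is a fin_num by rewrite fin_numM // mball_fin.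
have := fine_le F1 F2 h; rewrite fineM // ?mball_fin // => h'.
apply: (le_trans h'); rewrite exprS -mulrA ler_wpM2l //; exact: ltW K0.
Qed.
End H.

Lemma near0r (R : realType) (P : R -> Prop) :
  (\forall t \near 0^'+, P t) -> exists2 r0 : R, 0 < r0 & forall t, 0 < t -> t < r0 -> P t.
Proof.
move=> H. have [e /= e0 He] := H.
exists e => // t t0 te. apply: He => //=.
rewrite sub0r normrN gtr0_norm //.
Qed.

Lemma ereal_dense (R : realType) (u v : \bar R) : (u < v)%E -> exists a : R, (u < a%:E < v)%E.
Proof.
case: u => [a||]; case: v => [b||] //=.
- rewrite lte_fin => ab; exists ((a + b) / 2); rewrite !lte_fin; apply/andP; split; lra.
- move=> _; exists (a + 1); rewrite lte_fin ltry andbT; lra.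
- move=> _; exists (b - 1); rewrite lte_fin ltNyr /=; lra.
- move=> _; exists 0; rewrite ltNyr ltry //.
Qed.

Theorem proposition2p4 (R : realType) (X : Type) (K : R) (rho : X -> X -> R)
    (mu : {outer_measure set X -> \bar R}) (x : X) (B : set X) (f : X -> R) :
  doubling_mms K rho mu ->
  mu [set x] = 0%E ->
  mu_nbhd rho mu x B ->
  (forall y, B y -> 0 <= f y) ->
  mms_lipschitz_on rho B f ->
  f x = 0 ->
  metric_limsup rho B (fun y => f y / rho y x) x =
  mu_limsup rho mu B (fun y => f y / rho y x) x.
Proof.
move=> dm _ Bn f0 [L Lip] fx0.
have m0 := @met0 _ _ _ _ _ dm; have mE := @metE _ _ _ _ _ dm; have mC := @metC _ _ _ _ _ dm; have mT := @metT _ _ _ _ _ dm.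
apply/le_anti/andP; split; last first.
  apply/ereal_infP => _ [r r0 <-]; apply: ereal_inf_lbound.
  exists (mball rho x r); last by rewrite setIC.
  split; first by rewrite /mball /= (proj2 (mE x x) erefl).
  exists (mball rho x r); split => //; first exact: (@mball_borel _ _ _ _ _ dm x r).
  apply/cvgrPdist_lt => e e0; near=> t.
  have tr : t < r by near: t; exact: nbhs_right_lt.
  have -> : mball rho x t `\` mball rho x r = set0.
    apply/seteqP; split => // w [] /=; rewrite /mball /= => h1 h2.
    by apply: h2; exact: lt_trans h1 tr.
  by rewrite outer_measure0 /= mul0r subr0 normr0.
apply/ereal_infP => _ [U Un <-].
set g := (fun y => f y / rho y x).
case: Un => Ux [Uc [UcB UcU Ucv]].
case: Bn => Bx [Bc [BcB BcB' Bcv]].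
rewrite leNgt; apply/negP => SM.
have [c0 /andP[Sc0 c0M]] := ereal_dense _ _ _ SM.
have [c /andP[c0c cM]] := ereal_dense _ _ _ c0M.
rewrite lte_fin in c0c.
have gU : forall z, U z -> B z -> z <> x -> f z < c0 * rho z x.
  move=> z Uz Bz zx.
  have rz : 0 < rho z x.
    by rewrite lt_neqAle m0 andbT eq_sym; apply/eqP => /mE.
  have : ((g z)%:E <= ereal_sup [set (g y)%:E | y in (U `&` B) `\ x])%E.
    by apply: ereal_sup_ubound; exists z.
  move=> /le_lt_trans /(_ Sc0); rewrite lte_fin /g ltr_pdivrMr //.
set A := (`|c0| + `|L|) / (c - c0).
have A0 : 0 <= A.
  apply: divr_ge0; [by rewrite addr_ge0 | lra].
set k := (Num.bound A).+1.
set D : R := 2 ^+ k.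
have D2 : 2 <= D.
  by rewrite /D /k exprS ler_peMr // exprn_ege1 // ler1n.
have AD : A < D.
  apply: (lt_le_trans (archi_boundP A0)).
  rewrite /D -natrX ler_nat /k; apply: (leq_trans (leqnSn _)); apply: ltnW; exact: ltn_expl.
have AD' : (`|c0| + `|L|) / D < c - c0.
  have D0 : 0 < D by apply: lt_le_trans D2.
  have cc0 : 0 < c - c0 by rewrite subr_gt0.
  move: AD; rewrite /A ltr_pdivrMr // => h.
  by rewrite ltr_pdivrMr // mulrC.
have D0 : 0 < D by apply: lt_le_trans D2.
set q := K ^+ k.+2.
have q0 : 0 < q by rewrite exprn_gt0 // (@K0 _ _ _ _ _ dm).
have e0 : 0 < (2 * q)^-1 by rewrite invr_gt0 mulr_gt0.
move/cvgrPdist_lt: Bcv => /(_ _ e0) /near0r [r1 r10 hB].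
move/cvgrPdist_lt: Ucv => /(_ _ e0) /near0r [r2 r20 hU].
set r0 := Order.min r1 r2.
have r00 : 0 < r0 by rewrite lt_min r10 r20.
have : (c%:E < ereal_sup [set (g y)%:E | y in (B `&` mball rho x (r0 / 2)) `\ x])%E.
  apply: (lt_le_trans cM); apply: ereal_inf_lbound; exists (r0 / 2) => //.
  by rewrite /= divr_gt0.
move/ereal_sup_gt => [_ [y [[By ry] yx] <-]]; rewrite lte_fin /g => cy.
rewrite /mball /= in ry.
set s := rho y x.
have s0 : 0 < s by rewrite lt_neqAle m0 andbT eq_sym; apply/eqP => /mE.
have fy : c * s < f y by rewrite -ltr_pdivlMr.
have sxy : s = rho x y by rewrite /s mC.
have r01 : r0 <= r1 by rewrite /r0 ge_min lexx.
have r02 : r0 <= r2 by rewrite /r0 ge_min lexx orbT.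
have t0 : 0 < 2 * s by rewrite mulr_gt0.
have tr1 : 2 * s < r1 by lra.
have tr2 : 2 * s < r2 by lra.
have sD : s / D <= s / 2 by rewrite ler_wpM2l ?(ltW s0) // lef_pV2 ?posrE.
have sD0 : 0 < s / D by rewrite divr_gt0.
have [z [Yz Bz Uz]] : exists z, [/\ mball rho y (s / D) z, Bc z & Uc z].
  case: (pselect (exists z, [/\ mball rho y (s / D) z, Bc z & Uc z])) => // nz; exfalso.
  set Y := mball rho y (s / D).
  set T := mball rho x (2 * s).
  have YT0 : Y `<=` T.
    move=> w; rewrite /Y /T /mball /= => hw.
    have := mT x y w; lra.
  have YT : Y `<=` (T `\` Bc) `|` (T `\` Uc).
    move=> w Yw; have Tw := YT0 _ Yw.
    case: (pselect (Bc w)) => hb; [right|left]; split => //.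
    by move=> hu; apply: nz; exists w.
  have Tf : mu T \is a fin_num by apply: (@mball_fin _ _ _ _ _ dm).
  have D1f : mu (T `\` Bc) \is a fin_num.
    by apply: (@sub_fin _ _ _ _ _ dm x (2 * s)) => // w [].
  have D2f : mu (T `\` Uc) \is a fin_num.
    by apply: (@sub_fin _ _ _ _ _ dm x (2 * s)) => // w [].
  have Yf : mu Y \is a fin_num by apply: (@sub_fin _ _ _ _ _ dm x (2 * s)).
  have hb : fine (mu Y) <= fine (mu (T `\` Bc)) + fine (mu (T `\` Uc)).
    rewrite -fineD //; apply: fine_le => //; first by rewrite fin_numD D1f D2f.
    exact: le_trans (le_outer_measure mu _ _ YT) (outer_measureU2 _ _ _).
  set big := mball rho y (2 ^+ k.+2 * (s / D)).
  have Tbig : T `<=` big.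
    move=> w; rewrite /big /T /mball /=.
    have -> : 2 ^+ k.+2 * (s / D) = 4 * s.
      by rewrite /D !exprS; field; apply: expf_neq0.
    have := mT y x w; rewrite -/s; lra.
  have bigf : mu big \is a fin_num.
    by apply: (@mball_fin _ _ _ _ _ dm); rewrite mulr_gt0 // exprn_gt0.
  have hT : fine (mu T) <= q * fine (mu Y).
    apply: le_trans (@doubling_iter _ _ _ _ _ dm k.+2 y (s / D) sD0).
    by apply: fine_le => //; apply: le_outer_measure.
  have a0 : 0 < fine (mu T) by apply: (@mball_pos _ _ _ _ _ dm).
  have h1 : fine (mu (T `\` Bc)) / fine (mu T) < (2 * q)^-1.
    have := hB _ t0 tr1; rewrite distrC subr0; apply: le_lt_trans; exact: ler_norm.
  have h2 : fine (mu (T `\` Uc)) / fine (mu T) < (2 * q)^-1.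
    have := hU _ t0 tr2; rewrite distrC subr0; apply: le_lt_trans; exact: ler_norm.
  rewrite ltr_pdivrMr // in h1; rewrite ltr_pdivrMr // in h2.
  have iq : (2 * q)^-1 * (2 * q) = 1 by rewrite mulVf // gt_eqF // mulr_gt0.
  set a := fine (mu T) in a0 hT h1 h2.
  set d1 := fine (mu (T `\` Bc)) in hb h1.
  set d2 := fine (mu (T `\` Uc)) in hb h2.
  set b := fine (mu Y) in hb hT.
  set iv := (2 * q)^-1 in h1 h2 iq.
  have : q * b <= q * (d1 + d2) by rewrite ler_wpM2l // ltW.
  have e1 : d1 * (2 * q) < iv * a * (2 * q) by rewrite ltr_pM2r // mulr_gt0.
  have e2 : d2 * (2 * q) < iv * a * (2 * q) by rewrite ltr_pM2r // mulr_gt0.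
  have : iv * a * (2 * q) = a by rewrite mulrAC iq mul1r.
  nra.
have Bz' := BcB' _ Bz; have Uz' := UcU _ Uz.
rewrite /mball /= in Yz.
have p0 : 0 <= rho y z := m0 y z.
have w1 := mT y z x; have w2 := mT z y x.
rewrite -/s (mC z y) in w1 w2.
have zx : z <> x.
  move=> zx; rewrite zx -/s in Yz; lra.
have fz := gU z Uz' Bz' zx.
have lip := Lip y z By Bz'.
have lip2 : f y - f z <= `|L| * rho y z.
  apply: le_trans (ler_norm _) (le_trans lip _).
  by rewrite ler_wpM2r // ler_norm.
have hc0 : c0 * (rho z x - s) <= `|c0| * rho y z.
  apply: le_trans (ler_norm _) _; rewrite normrM ler_wpM2l //.
  rewrite ler_norml; apply/andP; split; lra.
have hp : (`|c0| + `|L|) * rho y z <= (`|c0| + `|L|) * (s / D).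
  by rewrite ler_wpM2l ?addr_ge0 // ltW.
have hq : (`|c0| + `|L|) * (s / D) < (c - c0) * s.
  by rewrite mulrA mulrAC ltr_pM2r.
nra.
Unshelve. all: by end_near.
Qed.
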